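(* Under the same independence assumptions, for any two instances $\mathbf x,\mathbf y$: if $\lim_{n\to\infty}P(\mathbf y\in L(\mathbf x)\mid\mathcal D)=0$ then $P(\mathbf y\in\bar I(\mathbf x)\mid\mathcal D)=0$; if $\lim_{n\to\infty}P(\mathbf y\in L(\mathbf x)\mid\mathcal D)>0$ then $P(\mathbf y\in\bar I(\mathbf x)\mid\mathcal D)=1$.
   Context: Setting: $n$ instances with covariates in $\mathbb R^d$ form the dataset $\mathcal D=\mathcal D_n$; a forest $\Theta_K$ of $K$ axis-aligned causal trees is built on $\mathcal D$, the trees being independent given $\mathcal D$. $L_k(\mathbf x)$ is the leaf of tree $k$ containing $\mathbf x$ and $I(\mathbf x,\theta_k)$ its box; $P(\mathbf y\in L(\mathbf x)\mid\mathcal D)$ denotes $P(\mathbf y\in L_k(\mathbf x)\mid\mathcal D)$, the same for every $k$, and the events $\{\mathbf y\in L_k(\mathbf x)\}$, $k=1,\dots,K$, are independent given $\mathcal D$. LSLI with $K$ trees: $\bar I(\mathbf x,\Theta_K)=\bigcap_{s>K-\sqrt K}\bigcap_{1\le i_1<\cdots<i_s\le K}\bigcup_{k=1}^sI(\mathbf x,\theta_{i_k})$, and $P(\mathbf y\in\bar I(\mathbf x)\mid\mathcal D):=\lim_{K\to\infty}\lim_{n\to\infty}P(\mathbf y\in\bar I(\mathbf x,\Theta_K)\mid\mathcal D_n)$. *)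

(* Defs.v *)
From HB Require Import structures.
From mathcomp Require Import all_boot all_order all_algebra.
From mathcomp Require Import all_classical all_reals all_analysis.
Set Implicit Arguments. Unset Strict Implicit. Unset Printing Implicit Defensive.
Import Order.TTheory GRing.Theory Num.Theory.
Import numFieldNormedType.Exports.
Local Open Scope classical_set_scope.
Local Open Scope ring_scope.

Definition mutually_independent_events {d : measure_display}
  {T : measurableType d} {R : realType} (P : probability T R)
  (E : nat -> set T) : Prop :=
  forall s : seq nat, uniq s ->
    P (\big[setI/setT]_(k <- s) E k) = (\prod_(k <- s) P (E k))%E.

Definition axis_aligned_box {R : realType} (dim : nat) (B : set 'rV[R]_dim) :
  Prop :=
  exists J : 'I_dim -> interval R, B = [set z | forall i, z 0 i \in J i].

Definition LSLI {R : realType} {V : Type} (K : nat) (I : nat -> set V) : set V :=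
  \bigcap_(s in [set s : nat | K%:R - Num.sqrt (K%:R : R) < s%:R])
    \bigcap_(S in [set S : {set 'I_K} | #|S| = s])
      \bigcup_(k in [set k : 'I_K | k \in S]) I (nat_of_ord k).

(* Main.v *)
Require Import Defs.
From HB Require Import structures.
From mathcomp Require Import all_boot all_order all_algebra.
From mathcomp Require Import all_classical all_reals all_analysis.
From mathcomp Require Import ring lra.
Import Order.TTheory GRing.Theory Num.Theory.
Import numFieldNormedType.Exports.
Local Open Scope classical_set_scope.
Local Open Scope ring_scope.

Lemma in_bigsetI (T : Type) (I : eqType) (s : seq I) (F : I -> set T) w :
  (\big[setI/setT]_(i <- s) F i) w <-> forall i, i \in s -> F i w.
Proof.
elim: s => [|j s IH]; first by rewrite big_nil; split.
rewrite big_cons; split.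
- move=> [Hj /IH Hs] i; rewrite in_cons => /orP[/eqP->//|]; exact: Hs.
- move=> H; split; first by apply: H; rewrite mem_head.
  by apply/IH => i Hi; apply: H; rewrite in_cons Hi orbT.
Qed.

Lemma in_bigsetU (T : Type) (I : eqType) (s : seq I) (F : I -> set T) w :
  (\big[setU/set0]_(i <- s) F i) w <-> exists i, i \in s /\ F i w.
Proof.
elim: s => [|j s IH]; first by rewrite big_nil; split => // -[i []].
rewrite big_cons; split.
- move=> [Hj|/IH [i [Hi Fi]]]; first by exists j; rewrite mem_head.
  by exists i; rewrite in_cons Hi orbT.
- move=> [i []]; rewrite in_cons => /orP[/eqP-> Fj|Hi Fi]; first by left.
  by right; apply/IH; exists i.
Qed.

Lemma P_bigU (d : measure_display) (T : measurableType d) (R : realType)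
  (P : probability T R) (I : eqType) (s : seq I) (F : I -> set T) :
  uniq s -> (forall i, measurable (F i)) ->
  (forall i j, i != j -> F i `&` F j = set0) ->
  P (\big[setU/set0]_(i <- s) F i) = (\sum_(i <- s) P (F i))%E.
Proof.
move=> us mF dF; elim: s us => [|j s IH]; first by rewrite !big_nil measure0.
rewrite /= => /andP[js us]; rewrite !big_cons measureU //.
- by congr (_ + _); apply: IH.
- exact: bigsetU_measurable.
- apply/seteqP; split => // w [Fj /in_bigsetU [i [Hi Fi]]].
  have : j != i by apply: contraNneq js => ->.
  by move/dF => /seteqP[+ _] => /(_ w) /=; apply.
Qed.

Lemma atom_prob (d : measure_display) (T : measurableType d) (R : realType)
  (P : probability T R) (A : nat -> set T) (p : R) :
  (forall k, measurable (A k)) -> mutually_independent_events P A ->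
  (forall k, P (A k) = p%:E) ->
  forall t s, uniq (s ++ t) ->
  P (\big[setI/setT]_(k <- s) A k `&` \big[setI/setT]_(k <- t) ~` A k)
    = (p ^+ size s * (1 - p) ^+ size t)%:E.
Proof.
move=> mA ind PA; elim=> [|j t IH] s ust.
  rewrite big_nil setIT expr0 mulr1 ind; last by rewrite cats0 in ust.
  rewrite (eq_bigr (fun => p%:E)) // prodEFin; congr (_%:E).
  by elim: (s) => [|? ? IH']; rewrite ?big_nil ?big_cons ?IH' ?expr0 /= ?exprS.
have mX : forall s', measurable (\big[setI/setT]_(k <- s') A k `&`
     \big[setI/setT]_(k <- t) ~` A k).
  move=> s'; apply: measurableI; apply: bigsetI_measurable => k _ //.
  exact: measurableC.
rewrite big_cons setICA setIC -setDE measureD //; last first.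
  by apply: (le_lt_trans (probability_le1 _ (mX s))); rewrite ltry.
have u2 : uniq ((j :: s) ++ t).
  change (uniq ([::j] ++ s ++ t)); by rewrite (perm_uniq (permEl (perm_catCA [::j] s t))).
have u1 : uniq (s ++ t) by case/andP: u2.
have E : forall (Y : set T), \big[setI/setT]_(k <- s) A k `&` Y `&` A j =
    \big[setI/setT]_(k <- j :: s) A k `&` Y.
  by move=> Y; rewrite big_cons setIAC (setIC (A j)).
transitivity ((p ^+ size s * (1 - p) ^+ size t)%:E -
  (p ^+ size (j :: s) * (1 - p) ^+ size t)%:E)%E.
  by congr (_ - _)%E; [apply: IH | rewrite E; apply: IH].
rewrite -EFinB; congr (_%:E).
by rewrite /= exprS [in RHS]exprS; ring.
Qed.
Lemma LSLI_char (R : realType) (V : Type) (K : nat) (I : nat -> set V) (v : V) :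
  @LSLI R V K I v <->
  Num.sqrt (K%:R : R) <= #|[set i : 'I_K | `[< I i v >]]%SET|%:R.
Proof.
set Sv := [set i : 'I_K | `[< I i v >]]%SET.
have cK : (#|Sv| <= K)%N by rewrite -[X in (_ <= X)%N]card_ord max_card.
have cC : #|~: Sv| = (K - #|Sv|)%N.
  by apply/eqP; rewrite -(eqn_add2l #|Sv|) cardsC card_ord subnKC.
rewrite /LSLI /=; split => H.
- rewrite leNgt; apply/negP => lt.
  have := H (K - #|Sv|)%N; rewrite /= natrB // => /(_ _ (~: Sv)).
  case.
  + lra.
  + by [].
  + move=> k /= kS Ik; move: kS; rewrite finset.in_setC finset.in_set.
    by move/negP; apply; apply/asboolP.
- move=> s /= hs S /= cS; apply: contrapT => nex.
  have sub : S \subset ~: Sv.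
    apply/fintype.subsetP => k kS; rewrite finset.in_setC finset.in_set; apply/negP => /asboolP Ik.
    by apply: nex; exists k.
  have := subset_leq_card sub; rewrite cC cS => le.
  have : (s%:R : R) <= (K - #|Sv|)%:R by rewrite ler_nat.
  rewrite natrB //; lra.
Qed.

Definition fsum {R : realType} (K : nat) (p : R) : R :=
  \sum_(T : {set 'I_K} | Num.sqrt (K%:R : R) <= #|T|%:R)
     p ^+ #|T| * (1 - p) ^+ (K - #|T|).

Lemma card_setC_ord (K : nat) (T : {set 'I_K}) : #|~: T| = (K - #|T|)%N.
Proof.
have cK : (#|T| <= K)%N by rewrite -[X in (_ <= X)%N]card_ord max_card.
by apply/eqP; rewrite -(eqn_add2l #|T|) cardsC card_ord subnKC.
Qed.

Lemma prob_LSLI (d : measure_display) (T : measurableType d) (R : realType)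
  (P : probability T R) (V : Type) (B : nat -> T -> set V) (v : V) (K : nat)
  (p : R) :
  (forall k, measurable [set w | B k w v]) ->
  mutually_independent_events P (fun k => [set w | B k w v]) ->
  (forall k, P [set w | B k w v] = p%:E) ->
  P [set w | @LSLI R V K (fun k => B k w) v] = (fsum K p)%:E.
Proof.
move=> mA ind PA.
set A := fun k => [set w | B k w v].
pose atom (S : {set 'I_K}) :=
  \big[setI/setT]_(k <- [seq val i | i <- enum S]) A k `&`
  \big[setI/setT]_(k <- [seq val i | i <- enum (~: S)]) ~` A k.
pose Sw w := [set i : 'I_K | `[< B i w v >]]%SET.
have C1 : forall S w, atom S w <-> Sw w = S.
  move=> S w; split.
  - move=> [/in_bigsetI H1 /in_bigsetI H2]; apply/setP => i.
    rewrite finset.in_set; case: (boolP (i \in S)) => iS.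
    + apply/asboolP; apply: H1; apply/mapP; exists i => //; by rewrite mem_enum.
    + apply/asboolPn; apply: H2; apply/mapP; exists i => //.
      by rewrite mem_enum finset.in_setC.
  - move=> <-; split; apply/in_bigsetI => k /mapP [i]; rewrite mem_enum => Hi ->.
    + by move: Hi; rewrite finset.in_set => /asboolP.
    + by move: Hi; rewrite finset.in_setC finset.in_set => /asboolPn.
have mat : forall S, measurable (atom S).
  move=> S; apply: measurableI; apply: bigsetI_measurable => k _;
  try apply: measurableC; exact: mA.
have dis : forall S S', S != S' -> atom S `&` atom S' = set0.
  move=> S S' nS; apply/seteqP; split => // w [/C1 h1 /C1 h2].
  by move/eqP: nS; apply; rewrite -h1 -h2.
have PS : forall S, P (atom S) = (p ^+ #|S| * (1 - p) ^+ (K - #|S|))%:E.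
  move=> S.
  have := @atom_prob d T R P A p mA ind PA [seq val i | i <- enum (~: S)]
     [seq val i | i <- enum S].
  rewrite !size_map -!cardE card_setC_ord; apply.
  rewrite -map_cat (map_inj_uniq val_inj) cat_uniq !enum_uniq /= andbT.
  apply/hasPn => i; rewrite mem_enum finset.in_setC => iS.
  by rewrite mem_enum.
have E : [set w | @LSLI R V K (fun k => B k w) v] =
   \big[setU/set0]_(S <- seq.filter (fun S : {set 'I_K} =>
                Num.sqrt (K%:R : R) <= #|S|%:R) (index_enum {set 'I_K})) atom S.
  apply/seteqP; split => w.
  - move=> /= /LSLI_char H; apply/in_bigsetU; exists (Sw w); split.
      by rewrite mem_filter H mem_index_enum.
    exact/C1.
  - move/in_bigsetU => [S [+ /C1 HS]]; rewrite mem_filter => /andP[H _].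
    by apply/LSLI_char; rewrite -/(Sw w) HS.
rewrite E P_bigU //; last by rewrite filter_uniq // index_enum_uniq.
rewrite /fsum big_filter -sumEFin; apply: eq_bigr => S _; exact: PS.
Qed.
Lemma cvg_pow (R : realType) (u : nat -> R) (l : R) (m : nat) :
  u @ \oo --> l -> (fun n => u n ^+ m) @ \oo --> l ^+ m.
Proof.
move=> hu; elim: m => [|m IH].
  rewrite expr0; under eq_fun do rewrite expr0; exact: cvg_cst.
rewrite exprS; under eq_fun do rewrite exprS; exact: cvgM.
Qed.

Lemma cvg_big (R : realType) (I : Type) (r : seq I) (P : pred I)
  (F : I -> nat -> R) (L : I -> R) :
  (forall i, F i @ \oo --> L i) ->
  (fun n => \sum_(i <- r | P i) F i n) @ \oo --> \sum_(i <- r | P i) L i.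
Proof.
move=> hF; elim: r => [|i r IH].
  rewrite big_nil; under eq_fun do rewrite big_nil; exact: cvg_cst.
rewrite big_cons; under eq_fun do rewrite big_cons.
case: (P i) => //; exact: cvgD.
Qed.

Lemma cvg_fsum (R : realType) (K : nat) (u : nat -> R) (l : R) :
  u @ \oo --> l -> (fun n => fsum K (u n)) @ \oo --> fsum K l.
Proof.
move=> hu; rewrite /fsum.
have := @cvg_big R _ (index_enum {set 'I_K})
  (fun T : {set 'I_K} => Num.sqrt (K%:R : R) <= #|T|%:R)
  (fun T n => u n ^+ #|T| * (1 - u n) ^+ (K - #|T|))
  (fun T => l ^+ #|T| * (1 - l) ^+ (K - #|T|)).
apply => T.
apply: cvgM; first exact: cvg_pow.
apply: (@cvg_pow R (fun n => 1 - u n)); apply: cvgB => //; exact: cvg_cst.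
Qed.

Lemma fsum0 (R : realType) (K : nat) : (0 < K)%N -> fsum K (0 : R) = 0.
Proof.
move=> K0; rewrite /fsum big1 // => T hT.
have h1 : 1 <= Num.sqrt (K%:R : R).
  by rewrite -[X in X <= _]sqrtr1 ler_sqrt // ler1n.
have : (0 < #|T|)%N by rewrite -(ltr_nat R); apply: lt_le_trans hT; lra.
by case: #|T| => // j _; rewrite expr0n /= mul0r.
Qed.

Lemma total_sum (R : realType) (K : nat) (a b : R) :
  \sum_(T : {set 'I_K}) a ^+ #|T| * b ^+ (K - #|T|) = (a + b) ^+ K.
Proof.
have := @bigA_distr R 0 1 *%R +%R 'I_K (fun => a) (fun => b).
rewrite prodr_const card_ord => ->.
apply: eq_bigr => T _.
rewrite (bigID (mem T)) /= -card_setC_ord.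
rewrite (eq_bigr (fun => a)); last by move=> i ->.
rewrite [in RHS](eq_bigr (fun => b) (P := fun i => i \notin T)); last by move=> i Hi; rewrite (negbTE Hi).
rewrite prodr_const (eq_bigl (fun i => i \in ~: T)); last first.
  by move=> i; rewrite finset.in_setC.
by rewrite prodr_const.
Qed.
Lemma ev_le (R : realType) (z e : R) : 0 <= z < 1 -> 0 < e ->
  exists N, forall n, (N <= n)%N -> z ^+ n <= e.
Proof.
move=> /andP[z0 z1] e0.
have hz : `|z| < 1 by rewrite ger0_norm.
have := @cvgr0_norm_le _ _ _ _ _ (fun n => z ^+ n) (cvg_expr hz) e e0.
move=> [N _ HN]; exists N => n hn.
have := HN n hn; rewrite /= ger0_norm //; exact: exprn_ge0.
Qed.

Lemma key (R : realType) (r e : R) : 0 <= r < 1 -> 0 < e ->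
  exists K0, forall K j, (K0 <= K)%N -> (j * j < K)%N ->
    2 ^+ j * r ^+ K <= e.
Proof.
move=> /andP[r0 r1] e0.
have [N1 H1] := @ev_le R r (1/4) (ltac:(apply/andP; split => //)) (ltac:(lra)).
have [N2 H2] := @ev_le R (1/2) e (ltac:(apply/andP; split; lra)) e0.
set N := maxn N1 N2.
have rN : r ^+ N <= 1/4 by apply: H1; rewrite leq_maxl.
have hN : (1/2) ^+ N <= e by apply: H2; rewrite leq_maxr.
have p2N : 0 < (2 : R) ^+ N by apply: exprn_gt0.
have [K0 H3] := @ev_le R r (e / 2 ^+ N) (ltac:(apply/andP; split => //))
   (ltac:(apply: divr_gt0 => //)).
exists K0 => K j hK hj.
have rK0 : 0 <= r ^+ K by apply: exprn_ge0.
case: (ltnP j N) => hjN.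
- apply: (@le_trans _ _ (2 ^+ N * r ^+ K)).
    apply: ler_wpM2r => //; apply: ler_weXn2l; [lra | exact: ltnW].
  have := H3 K hK; rewrite mulrC -ler_pdivlMl //.
- have rjj : r ^+ K <= r ^+ (j * j) by apply: ler_wiXn2l => //; [exact: ltW | exact: ltnW].
  have rj : r ^+ j <= 1/4.
    apply: le_trans rN; apply: ler_wiXn2l => //; exact: ltW.
  apply: (@le_trans _ _ (2 ^+ j * r ^+ (j * j))).
    by apply: ler_wpM2l => //; apply: exprn_ge0.
  rewrite exprM -exprMn.
  apply: (@le_trans _ _ ((1/2) ^+ j)).
    apply: lerXn2r; rewrite ?nnegrE.
    + by apply: mulr_ge0 => //; apply: exprn_ge0.
    + lra.
    + have : 0 <= r ^+ j by apply: exprn_ge0.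
      lra.
  apply: le_trans hN; apply: ler_wiXn2l => //; lra.
Qed.

Lemma fsum_to1 (R : realType) (l : R) : 0 < l <= 1 ->
  (fun K => fsum K l) @ \oo --> (1 : R).
Proof.
move=> /andP[l0 l1].
apply/cvgrPdist_le => e e0.
set q := 1 - l; set r := 1 - l / 2.
have [K0 H] := @key R r e (ltac:(apply/andP; split; rewrite /r; lra)) e0.
exists K0 => // K /= hK.
pose w (T : {set 'I_K}) := l ^+ #|T| * q ^+ (K - #|T|).
pose w2 (T : {set 'I_K}) := (l / 2) ^+ #|T| * q ^+ (K - #|T|).
have tot : \sum_(T : {set 'I_K}) w T = 1.
  rewrite /w total_sum /q (_ : l + (1 - l) = 1) ?expr1n //; ring.
have tot2 : \sum_(T : {set 'I_K}) w2 T = r ^+ K.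
  by rewrite /w2 total_sum /q /r; congr (_ ^+ _); lra.
set good := (fun T : {set 'I_K} => Num.sqrt (K%:R : R) <= #|T|%:R).
set bad := \sum_(T | ~~ good T) w T.
have split1 : 1 = \sum_(T | good T) w T + bad.
  by rewrite -tot (bigID good).
have -> : 1 - fsum K l = bad by rewrite split1 /fsum; ring.
have q0 : 0 <= q by rewrite /q; lra.
have bad0 : 0 <= bad.
  apply: sumr_ge0 => T _; rewrite /w; apply: mulr_ge0; apply: exprn_ge0 => //.
  exact: ltW.
rewrite ger0_norm //.
have rK : 0 < r ^+ K by apply: exprn_gt0; rewrite /r; lra.
rewrite -(ler_pM2r rK).
apply: (@le_trans _ _ (\sum_(T | ~~ good T) w2 T * e)).
  rewrite /bad mulr_suml; apply: ler_sum => T hT.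
  have hj : (#|T| * #|T| < K)%N.
    rewrite -(ltr_nat R) natrM.
    have s0 := sqrtr_ge0 (K%:R : R).
    have s2 : Num.sqrt (K%:R : R) ^+ 2 = K%:R by rewrite sqr_sqrtr.
    move: hT; rewrite -ltNge => hT.
    have j0 : (0 : R) <= #|T|%:R by [].
    nra.
  have := H K #|T| hK hj.
  rewrite /w /w2 => h.
  have -> : l ^+ #|T| * q ^+ (K - #|T|) * r ^+ K =
     (l / 2) ^+ #|T| * q ^+ (K - #|T|) * (2 ^+ #|T| * r ^+ K).
    rewrite expr_div_n; field.
    by apply: expf_neq0; rewrite pnatr_eq0.
  apply: ler_wpM2l => //; apply: mulr_ge0; apply: exprn_ge0 => //.
  by apply: divr_ge0 => //; exact: ltW.
rewrite -mulr_suml -tot2 mulrC; apply: ler_wpM2l; first exact: ltW.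
rewrite [X in _ <= X](bigID good) /=.
rewrite lerDr; apply: sumr_ge0 => T _; apply: mulr_ge0; apply: exprn_ge0 => //.
by apply: divr_ge0 => //; exact: ltW.
Qed.
Theorem mainTheorem6 (R : realType) (dim : nat) (d : measure_display)
  (Omega : nat -> measurableType d) (P : forall n, probability (Omega n) R)
  (Theta : nat -> Type) (theta : forall n, nat -> Omega n -> Theta n)
  (box : forall n, 'rV[R]_dim -> Theta n -> set 'rV[R]_dim)
  (x y : 'rV[R]_dim) :
  (forall n (z : 'rV[R]_dim) (t : Theta n),
      axis_aligned_box (box n z t) /\ box n z t z) ->
  (forall n k, measurable [set w : Omega n | box n x (theta n k w) y]) ->
  (forall n, mutually_independent_events (P n)
               (fun k => [set w : Omega n | box n x (theta n k w) y])) ->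
  (forall n k, P n [set w | box n x (theta n k w) y]
             = P n [set w | box n x (theta n 0%N w) y]) ->
  let pL := fun n => fine (P n [set w | box n x (theta n 0%N w) y]) in
  let pI := fun K n =>
     fine (P n [set w | @LSLI R _ K (fun k => box n x (theta n k w)) y]) in
  ((pL @ \oo --> (0 : R)) ->
     exists a : nat -> R, (forall K, pI K @ \oo --> a K) /\ a @ \oo --> (0 : R))
  /\
  (forall l : R, 0 < l -> pL @ \oo --> l ->
     exists a : nat -> R, (forall K, pI K @ \oo --> a K) /\ a @ \oo --> (1 : R)).

Proof.
move=> Hbox Hmeas Hind Heq pL pI.
have PA : forall n k, P n [set w | box n x (theta n k w) y] = (pL n)%:E.
  move=> n k; rewrite Heq /pL fineK //; apply: fin_num_measure; exact: Hmeas.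
have hpI : forall K, pI K = fun n => fsum K (pL n).
  move=> K; apply: funext => n; rewrite /pI.
  have := @prob_LSLI d (Omega n) R (P n) _ (fun k w => box n x (theta n k w)) y K
    (pL n) (Hmeas n) (Hind n) (PA n).
  by move=> /= ->.
have pL01 : forall n, 0 <= pL n <= 1.
  move=> n; have := PA n 0%N => h.
  have h0 : (0 <= (pL n)%:E)%E by rewrite -h; apply: measure_ge0.
  have h1 : ((pL n)%:E <= 1)%E by rewrite -h; apply: probability_le1; exact: Hmeas.
  by rewrite -!lee_fin h0 h1.
split.
- move=> h0; exists (fun K => fsum K 0); split.
  + by move=> K; rewrite hpI; exact: cvg_fsum.
  + apply: cvg_near_cst; exists 1%N => // K /= hK; exact: fsum0.
- move=> l l0 hl; exists (fun K => fsum K l); split.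
  + by move=> K; rewrite hpI; exact: cvg_fsum.
  + apply: fsum_to1; rewrite l0 /=.
    rewrite -(cvg_lim _ hl) //; apply: limr_le; first exact: cvgP hl.
    by apply: nearW => n; case/andP: (pL01 n).
Qed.
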